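(* Let $n_1,\dots,n_m$ be positive integers, $N=n_1+\cdots+n_m$, and let $N_1,\dots,N_m$ be positive integers with $N_j\ge N-1$ for $j=1,\dots,m$. Define $Q(z)=\sum_{k=0}^N a_kz^k$ by $a_N=1$ and, for $k=0,1,\dots,N-1$, \[ a_{N-k-1}=\sum_{\ell=k}^{N-1}(-1)^{\ell+1}\frac{(\alpha_0-1)_{\ell-k}}{(\ell-k)!}\,\frac{(\alpha_0+\ell+1)_{N-\ell-1}}{(N-\ell-1)!}\prod_{j=1}^m\frac{(\alpha_j+\alpha_0+N_j-N+\ell+1)_{n_j}}{(\alpha_j+N_j-N+1)_{n_j}}, \] and for $j=1,\dots,m$ define $P_j(z)=\sum_{\mu=0}^{N_j}c_{j\mu}z^\mu$ with \[ c_{j\mu}=\sum_{k=0}^{\min\{N,\mu\}}a_k\frac{(\alpha_j)_{\mu-k}}{(\alpha_j+\alpha_0)_{\mu-k}}. \] Then $Q\neq0$, $\deg Q\le N$, $\deg P_j\le N_j$, and, as formal power series in $\mathbb{Q}[[z]]$, $\operatorname{ord}_{z=0}\big(Q(z)\varphi_j(z)-P_j(z)\big)\ge N_j+n_j+1$ for $j=1,\dots,m$. That is, $Q,P_1,\dots,P_m$ are type $(N;N_1,\dots,N_m)$ Padé approximation polynomials of the second kind for $\varphi_1,\dots,\varphi_m$.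
   Context: Let $m\ge1$ and let $\alpha_0,\alpha_1,\dots,\alpha_m$ be positive rational numbers with $\alpha_i-\alpha_j\notin\mathbb{Z}$ for $1\le i<j\le m$. Pochhammer symbol: $(x)_0=1$, $(x)_n=x(x+1)\cdots(x+n-1)$ for $n\ge1$. Define the formal power series $\varphi_j(z)=\sum_{n=0}^\infty\frac{(\alpha_j)_n}{(\alpha_j+\alpha_0)_n}z^n$, $j=1,\dots,m$. $\operatorname{ord}$ denotes the order of vanishing at $z=0$. Polynomials $Q\ne0,P_1,\dots,P_m$ are called type $(N;N_1,\dots,N_m)$ Padé approximation polynomials of the second kind for $\varphi_1,\dots,\varphi_m$ if $\deg Q\le N$, $\deg P_j\le N_j$ and $\operatorname{ord}(Q\varphi_j-P_j)\ge N_j+n_j+1$ for all $j$. *)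

(* Defs.v *)
From HB Require Import structures.
From mathcomp Require Import all_boot all_order all_algebra.
Set Implicit Arguments. Unset Strict Implicit. Unset Printing Implicit Defensive.
Import Order.TTheory GRing.Theory Num.Theory.
Local Open Scope ring_scope.

Definition poch (x : rat) (n : nat) : rat := \prod_(i < n) (x + i%:R).

(* n-th coefficient of phi_j(z) = sum_n (a_j)_n / (a_j + a_0)_n z^n *)
Definition phi_coef (alpha : nat -> rat) (j n : nat) : rat :=
  poch (alpha j) n / poch (alpha j + alpha 0%N) n.

Definition bigN (m : nat) (n : nat -> nat) : nat := \sum_(1 <= j < m.+1) n j.

(* a_i for i = 0..N : a_N = 1 and a_{N-k-1} given by the explicit formula
   with k = N - 1 - i. *)
Definition acoef (alpha : nat -> rat) (m : nat) (n Nj : nat -> nat) (i : nat)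
  : rat :=
  let N := bigN m n in
  if i == N then 1 else
  let k := (N - 1 - i)%N in
  \sum_(k <= l < N)
    (-1) ^+ l.+1
    * (poch (alpha 0%N - 1) (l - k) / (l - k)`!%:R)
    * (poch (alpha 0%N + l%:R + 1) (N - l - 1) / (N - l - 1)`!%:R)
    * \prod_(1 <= j < m.+1)
        (poch (alpha j + alpha 0%N + (Nj j)%:R - N%:R + l%:R + 1) (n j)
         / poch (alpha j + (Nj j)%:R - N%:R + 1) (n j)).

Definition Qpoly alpha m n Nj : {poly rat} :=
  \poly_(i < (bigN m n).+1) acoef alpha m n Nj i.

Definition ccoef alpha m n Nj (j mu : nat) : rat :=
  \sum_(0 <= k < (minn (bigN m n) mu).+1)
     acoef alpha m n Nj k * phi_coef alpha j (mu - k).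

Definition Ppoly alpha m n Nj (j : nat) : {poly rat} :=
  \poly_(mu < (Nj j).+1) ccoef alpha m n Nj j mu.

(* ord_{z=0}(Q(z) f(z) - P(z)) >= r for the formal power series f with
   coefficient sequence f : nat -> rat: all coefficients of z^k, k < r,
   of the formal power series Q f - P vanish. *)
Definition ord_ge (Q : {poly rat}) (f : nat -> rat) (P : {poly rat}) (r : nat)
  : Prop :=
  forall k : nat, (k < r)%N -> \sum_(i < k.+1) Q`_i * f (k - i)%N - P`_k = 0.

(* Main.v *)
Require Import Defs.
From HB Require Import structures.
From mathcomp Require Import all_boot all_order all_algebra.
From mathcomp Require Import ring lra zify.
From Stdlib Require Import Lia.
Import Order.TTheory GRing.Theory Num.Theory.
Local Open Scope ring_scope.

Lemma poch0 x : poch x 0 = 1.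
Proof. by rewrite /poch big_ord0. Qed.

Lemma pochS x n : poch x n.+1 = poch x n * (x + n%:R).
Proof. by rewrite /poch big_ord_recr. Qed.

Lemma pochSl x n : poch x n.+1 = x * poch (x + 1) n.
Proof.
rewrite /poch big_ord_recl /= addr0; congr (_ * _).
apply: eq_bigr => i _; rewrite /bump /= add1n -natr1; ring.
Qed.

Lemma poch_add x p q : poch x (p + q)%N = poch x p * poch (x + p%:R) q.
Proof.
elim: q => [|q IH]; first by rewrite addn0 poch0 mulr1.
by rewrite addnS !pochS IH natrD addrA mulrA.
Qed.

Lemma poch_zero x n i : (i < n)%N -> x + i%:R = 0 -> poch x n = 0.
Proof.
move=> lt h; rewrite -(subnKC lt) poch_add pochS h.
by rewrite mulr0 mul0r.
Qed.

Lemma poch_rev x n : poch (-(x + n%:R)) n.+1 = (-1)^+n.+1 * poch x n.+1.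
Proof.
elim: n => [|n IH]; first by rewrite !pochS !poch0 !addr0 !mul1r expr1 mulN1r.
rewrite pochSl.
have -> : - (x + n.+1%:R) + 1 = - (x + n%:R) by rewrite -addn1 natrD; ring.
rewrite IH [in RHS]pochS [(-1)^+n.+2]exprS.
by rewrite mulN1r -[_ *+ _]/(n.+1%:R); ring.
Qed.

Lemma poch1 n : poch 1 n = n`!%:R.
Proof.
elim: n => [|n IH]; first by rewrite poch0.
by rewrite pochS IH factS natrM mulrC addrC natr1.
Qed.

Lemma poch_gt0 x n : 0 < x -> 0 < poch x n.
Proof.
move=> x0; elim: n => [|n IH]; first by rewrite poch0.
rewrite pochS mulr_gt0 //; apply: (lt_le_trans x0).
by rewrite lerDl.
Qed.

Definition Pb x d := poch x d / d`!%:R.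

Lemma fact_neq0 n : (n`!%:R : rat) != 0.
Proof. by rewrite pnatr_eq0 -lt0n fact_gt0. Qed.

Lemma PbS x e : e.+1%:R * Pb x e.+1 = (x + e%:R) * Pb x e.
Proof.
rewrite /Pb pochS factS natrM.
have := fact_neq0 e; have : (e.+1%:R : rat) != 0 by rewrite pnatr_eq0.
move=> h1 h2; rewrite -natr1; field.
by rewrite natr1 h1 h2.
Qed.

Lemma Pb0 x : Pb x 0 = 1.
Proof. by rewrite /Pb poch0 divr1. Qed.

Lemma vandermonde x y n :
  \sum_(d < n.+1) Pb x d * Pb y (n - d) = Pb (x + y) n.
Proof.
elim: n => [|n IH]; first by rewrite big_ord1 /= !Pb0 mulr1.
apply: (mulfI (x := n.+1%:R)); first by rewrite pnatr_eq0.
rewrite PbS -IH mulr_sumr.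
have eA : \sum_(d < n.+2) d%:R * (Pb x d * Pb y (n.+1 - d))
        = \sum_(d < n.+1) (x + d%:R) * (Pb x d * Pb y (n - d)).
  rewrite big_ord_recl /= mul0r add0r; apply: eq_bigr => i _.
  by rewrite /bump /= add1n subSS mulrA PbS mulrA.
have eB : \sum_(d < n.+2) (n.+1 - d)%:R * (Pb x d * Pb y (n.+1 - d))
        = \sum_(d < n.+1) (y + (n - d)%:R) * (Pb x d * Pb y (n - d)).
  rewrite big_ord_recr /= subnn mul0r addr0; apply: eq_bigr => i _.
  rewrite subSn; last by rewrite -ltnS.
  by rewrite mulrCA PbS mulrCA.
have -> : \sum_(d < n.+2) n.+1%:R * (Pb x d * Pb y (n.+1 - d))
   = \sum_(d < n.+2) d%:R * (Pb x d * Pb y (n.+1 - d))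
     + \sum_(d < n.+2) (n.+1 - d)%:R * (Pb x d * Pb y (n.+1 - d)).
  rewrite -big_split /=; apply: eq_bigr => i _.
  by rewrite -mulrDl -natrD subnKC // -ltnS.
rewrite eA eB -big_split mulr_sumr /=; apply: eq_bigr => i _.
rewrite -mulrDl; congr (_ * _).
have : (i <= n)%N by rewrite -ltnS.
move=> hi; rewrite natrB //; ring.
Qed.

Lemma vander0 b n :
  \sum_(d < n.+1) Pb b d * Pb (- b) (n - d) = (n == 0%N)%:R.
Proof.
rewrite vandermonde subrr; case: n => [|n]; first by rewrite Pb0.
by rewrite /Pb pochSl mul0r mul0r.
Qed.

Definition Ep a0 N p x := poch x p * poch (x + a0 + p%:R) (N - p).
Definition Kc a0 N q l :=
  (-1) ^+ l.+1 * (poch (a0 - 1) (l - q) / (l - q)`!%:R)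
  * (poch (a0 + l%:R + 1) (N - l - 1) / (N - l - 1)`!%:R).

Lemma poch_fact d M : (d <= M)%N -> poch (d.+1%:R) (M - d) = M`!%:R / d`!%:R.
Proof.
move=> le; rewrite -poch1 -{2}(subnKC le) poch_add poch1.
have := fact_neq0 d => h; rewrite -natr1 addrC; field; exact: h.
Qed.

Definition Cst a0 N l' n :=
  poch (-(a0 + l'%:R)) l'.+1 * (N - l'.+1)`!%:R * (-1) ^+ (l' + n).+1
  * (poch (a0 + (l' + n)%:R + 1) (N - (l' + n) - 1) / (N - (l' + n) - 1)`!%:R).

Lemma term a0 N l' d n : (l' + n < N)%N -> (d <= n)%N ->
  Ep a0 N (l' + d).+1 (- a0 - l'%:R) * Kc a0 N (l' + d) (l' + n)
  = Cst a0 N l' n * (Pb (1 - a0) d * Pb (a0 - 1) (n - d)).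
Proof.
move=> hN hd.
rewrite /Ep /Kc /Cst /Pb subnDl.
have -> : (l' + d).+1 = (l'.+1 + d)%N by rewrite addSn.
rewrite poch_add.
have -> : - a0 - l'%:R + l'.+1%:R = 1 - a0 by rewrite -natr1; ring.
have -> : - a0 - l'%:R + a0 + (l'.+1 + d)%:R = d.+1%:R by rewrite natrD -!natr1; ring.
have -> : (N - (l'.+1 + d) = (N - l'.+1) - d)%N by rewrite subnDA.
rewrite poch_fact; last by lia.
have -> : - a0 - l'%:R = -(a0 + l'%:R) by ring.
have h1 := fact_neq0 d; have h2 := fact_neq0 (n - d).
field. by rewrite h1 h2 fact_neq0.
Qed.

Lemma Ep_zero a0 N q l' : (q < l')%N -> (l' < N)%N ->
  Ep a0 N q.+1 (- a0 - l'%:R) = 0.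
Proof.
move=> h1 h2; rewrite /Ep (@poch_zero (- a0 - l'%:R + a0 + q.+1%:R) _ (l' - q.+1)) ?mulr0 //; first by lia.
rewrite natrB // -natr1; ring.
Qed.

Lemma Ep0_zero a0 N l' : (l' < N)%N -> Ep a0 N 0 (- a0 - l'%:R) = 0.
Proof.
move=> h; rewrite /Ep (@poch_zero (- a0 - l'%:R + a0 + 0%:R) _ l') ?mulr0 //; [by rewrite subn0|ring].
Qed.

Lemma sign2 k : ((-1) ^+ k * (-1) ^+ k = 1 :> rat).
Proof. by rewrite -exprMn mulrNN mulr1 expr1n. Qed.

Lemma Cst0 a0 N l' : (l' < N)%N -> Cst a0 N l' 0 = poch a0 N.
Proof.
move=> h; rewrite /Cst addn0 poch_rev.
have -> : (N - l' - 1 = N - l'.+1)%N by lia.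
rewrite -[in RHS](subnKC h) poch_add.
have -> : a0 + l'%:R + 1 = a0 + l'.+1%:R by rewrite -natr1 addrA.
have h2 := fact_neq0 (N - l'.+1).
have := sign2 l'.+1 => hs.
move: hs; set s := (-1) ^+ l'.+1 => hs.
rewrite [LHS](_ : _ = s * s * (poch a0 l'.+1 * poch (a0 + l'.+1%:R) (N - l'.+1))); first by rewrite hs mul1r.
field; exact: h2.
Qed.

Lemma inner a0 N l' l : (l' < N)%N -> (l < N)%N ->
  \sum_(q < N) (if (q <= l)%N then Kc a0 N q l * Ep a0 N q.+1 (- a0 - l'%:R) else 0)
  = (l == l')%:R * poch a0 N.
Proof.
move=> hl' hl.
rewrite -(big_mkord xpredT (fun q => if (q <= l)%N then Kc a0 N q l * Ep a0 N q.+1 (- a0 - l'%:R) else 0)).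
rewrite (big_cat_nat _ (n := l.+1)) //= [X in _ + X]big1_seq ?addr0; last first.
  move=> i /andP[_]; rewrite mem_index_iota => /andP[hi _].
  by rewrite leqNgt hi.
rewrite (eq_big_nat _ _ (F2 := fun q => Kc a0 N q l * Ep a0 N q.+1 (- a0 - l'%:R))); last first.
  by move=> i /andP[_ hi]; rewrite -ltnS hi.
case: (ltnP l l') => hll.
  rewrite big1_seq; last first.
    move=> i /andP[_]; rewrite mem_index_iota => /andP[_ hi].
    by rewrite Ep_zero ?mulr0 //; lia.
  have -> : (l == l') = false by apply/negbTE; rewrite neq_ltn hll.
  by rewrite mul0r.
rewrite (big_cat_nat _ (n := l')) //=; last by lia.
rewrite big1_seq ?add0r; last first.
  move=> i /andP[_]; rewrite mem_index_iota => /andP[_ hi].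
  by rewrite Ep_zero ?mulr0.
rewrite -{1}(add0n l') big_addn big_mkord.
set n := (l - l')%N.
have hln : l = (l' + n)%N by rewrite /n subnKC.
have -> : (l.+1 - l' = n.+1)%N by rewrite /n; lia.
rewrite (eq_bigr (fun d : 'I_n.+1 => Cst a0 N l' n * (Pb (1 - a0) d * Pb (- (1 - a0)) (n - d)))); last first.
  move=> d _; rewrite mulrC hln addnC term; last by rewrite -ltnS ltn_ord.
    by rewrite opprB.
  by rewrite -hln.
rewrite -mulr_sumr vander0.
case: (eqVneq n 0%N) => hn.
  by rewrite hln hn addn0 eqxx Cst0 // mulr1 mul1r.
have -> : (l == l') = false by apply/negbTE; rewrite hln -{2}(addn0 l') eqn_add2l.
by rewrite mulr0 mul0r.
Qed.

Definition bvec a0 N (H : {poly rat}) p :=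
  if p is q.+1 then \sum_(q <= l < N) Kc a0 N q l * H.[- a0 - l%:R] else H.[0].

Lemma claimA a0 N H :
  \sum_(p < N.+1) bvec a0 N H p * Ep a0 N p 0 = poch a0 N * H.[0].
Proof.
rewrite big_ord_recl big1 ?addr0; last first.
  by move=> i _; rewrite /Ep pochSl !mul0r mulr0.
by rewrite /bvec /Ep /= poch0 mul1r add0r addr0 subn0 mulrC.
Qed.

Lemma claimB a0 N H l' : (l' < N)%N ->
  \sum_(p < N.+1) bvec a0 N H p * Ep a0 N p (- a0 - l'%:R)
  = poch a0 N * H.[- a0 - l'%:R].
Proof.
move=> hl'.
rewrite big_ord_recl Ep0_zero // mulr0 add0r /=.
under eq_bigr => q _ do rewrite big_geq_mkord big_mkcond mulr_suml.
rewrite exchange_big /=.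
under eq_bigr => l _.
  rewrite (eq_bigr (fun q : 'I_N => H.[- a0 - l%:R] *
     (if (q <= l)%N then Kc a0 N q l * Ep a0 N q.+1 (- a0 - l'%:R) else 0))); last first.
    move=> q _; case: ifP => _; last by rewrite !mul0r mulr0.
    by rewrite mulrAC mulrC mulrA.
  rewrite -mulr_sumr inner //.
  over.
rewrite (bigD1 (Ordinal hl')) //= eqxx big1 ?addr0; first by rewrite mul1r mulrC.
move=> i hi; have -> : (nat_of_ord i == l') = false.
  by apply/negbTE; apply: contra hi => /eqP h; apply/eqP/val_inj.
by rewrite mul0r mulr0.
Qed.

Lemma size_pochP n (c : nat -> rat) :
  size (\prod_(i < n) ('X + (c i)%:P)) = n.+1.
Proof.
rewrite (eq_bigr (fun i : 'I_n => 'X - (- c i)%:P)); last first.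
  by move=> i _; rewrite polyCN opprK.
by rewrite size_prod_XsubC -[index_enum _]filter_predT deprecated_filter_index_enum -cardE card_ord.
Qed.

Lemma horner_pochP n (c : nat -> rat) x :
  (\prod_(i < n) ('X + (c i)%:P)).[x] = \prod_(i < n) (x + c i).
Proof.
rewrite horner_prod; apply: eq_bigr => i _.
by rewrite hornerD hornerX hornerC.
Qed.

Definition Epoly a0 N p : {poly rat} :=
  \prod_(i < p) ('X + (i%:R)%:P) * \prod_(i < N - p) ('X + (a0 + p%:R + i%:R)%:P).

Lemma Epoly_horner a0 N p x : (Epoly a0 N p).[x] = Ep a0 N p x.
Proof.
rewrite /Epoly hornerM (horner_pochP p (fun i => i%:R))
        (horner_pochP (N - p) (fun i => a0 + p%:R + i%:R)) /Ep /poch.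
congr (_ * _); apply: eq_bigr => i _; ring.
Qed.

Lemma Epoly_size a0 N p : (p <= N)%N -> (size (Epoly a0 N p) <= N.+1)%N.
Proof.
move=> hp; apply: leq_trans (size_polyMleq _ _) _.
rewrite (size_pochP p (fun i => i%:R)) (size_pochP (N - p) (fun i => a0 + p%:R + i%:R)).
by rewrite addSn addnS /= subnKC.
Qed.

Lemma interp a0 N (H : {poly rat}) x : 0 < a0 -> (size H <= N.+1)%N ->
  \sum_(p < N.+1) bvec a0 N H p * Ep a0 N p x = poch a0 N * H.[x].
Proof.
move=> ha hs.
pose D := \sum_(p < N.+1) bvec a0 N H p *: Epoly a0 N p - poch a0 N *: H.
have hD : forall y, D.[y] = \sum_(p < N.+1) bvec a0 N H p * Ep a0 N p y - poch a0 N * H.[y].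
  move=> y; rewrite /D hornerD hornerN hornerZ horner_sum.
  by congr (_ - _); apply: eq_bigr => p _; rewrite hornerZ Epoly_horner.
suff D0 : D = 0.
  by apply/eqP; rewrite -subr_eq0 -hD D0 horner0.
pose rs := 0 :: [seq - a0 - l%:R | l <- iota 0 N].
apply: (@roots_geq_poly_eq0 _ D rs).
- rewrite /rs /= {1}/root hD claimA subrr eqxx /=.
  apply/allP => r /mapP [l]; rewrite mem_iota add0n => /andP[_ hl] ->.
  by rewrite /root hD claimB // subrr.
- rewrite /rs /= map_inj_uniq ?iota_uniq ?andbT.
    apply/mapP => [[l _ h]]. have : (0 : rat) <= l%:R by rewrite ler0n.
    move: h; lra.
  move=> u v /eqP; rewrite -subr_eq0.
  have -> : - a0 - u%:R - (- a0 - v%:R) = v%:R - u%:R by ring.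
  rewrite subr_eq0 eqr_nat => /eqP; done.
- rewrite /rs /= size_map size_iota.
  apply: leq_trans (size_polyD _ _) _; rewrite size_polyN geq_max.
  rewrite (leq_trans (size_scale_leq _ _)) // andbT.
  apply: (big_ind (fun p : {poly rat} => (size p <= N.+1)%N)).
  + by rewrite size_poly0.
  + by move=> p q h1 h2; apply: leq_trans (size_polyD _ _) _; rewrite geq_max h1 h2.
  + by move=> p _; rewrite (leq_trans (size_scale_leq _ _)) // Epoly_size // -ltnS.
Qed.

Lemma pade_zero a0 al N t (H : {poly rat}) (b : nat -> rat) :
  0 < a0 -> 0 < al -> (size H <= N.+1)%N -> H.[al + t%:R] = 0 ->
  (forall p, (p <= N)%N -> b p = bvec a0 N H p) ->
  \sum_(0 <= p < N.+1) b p * (poch al (t + p) / poch (al + a0) (t + p)) = 0.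
Proof.
move=> ha hal hs hr hb.
set r := al + t%:R.
have hr0 : 0 < r by rewrite /r; apply: (lt_le_trans hal); rewrite lerDl.
set C := poch al t / poch (al + a0) t / poch (r + a0) N.
rewrite big_mkord.
rewrite (eq_bigr (fun p : 'I_N.+1 => C * (bvec a0 N H p * Ep a0 N p r))); last first.
  move=> p _; have hp : (p <= N)%N by rewrite -ltnS.
  rewrite hb // [RHS]mulrCA; congr (_ * _).
  rewrite /C /Ep !poch_add -[N in poch (r + a0) N](subnKC hp) poch_add.
  have g1 : 0 < poch (al + a0) t by apply: poch_gt0; lra.
  have g2 : 0 < poch (al + a0 + t%:R) p by apply: poch_gt0; rewrite /r in hr0; lra.
  have g3 : 0 < poch (r + a0 + p%:R) (N - p).
    apply: poch_gt0; have : (0 : rat) <= p%:R by rewrite ler0n. lra.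
  have -> : r + a0 = al + a0 + t%:R by rewrite /r; ring.
  have -> : al + t%:R = r by [].
  have -> : al + a0 + t%:R + p%:R = r + a0 + p%:R by rewrite /r; ring.
  field; rewrite !gt_eqF //.
rewrite -mulr_sumr interp // hr mulr0 mulr0 //.
Qed.

Lemma size_prod_le (I : Type) (r : seq I) (P : pred I) (F : I -> {poly rat}) :
  (size (\prod_(i <- r | P i) F i)%R <= (\sum_(i <- r | P i) (size (F i)).-1).+1)%N.
Proof.
elim/big_rec2: _ => [|i s p _ h]; first by rewrite size_poly1.
apply: leq_trans (size_polyMleq _ _) _; lia.
Qed.

Definition Hp (rr : nat -> nat -> rat) m (n : nat -> nat) : {poly rat} :=
  \prod_(1 <= j < m.+1) \prod_(s < n j) (1 - (rr j s)^-1 *: 'X).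

Lemma size_Hp rr m n : (size (Hp rr m n) <= (\sum_(1 <= j < m.+1) n j).+1)%N.
Proof.
rewrite /Hp. apply: leq_trans; first exact: size_prod_le. rewrite ltnS.
apply: leq_sum => j _.
have h : (size (\prod_(s < n j) (1 - (rr j s)^-1 *: 'X))%R <= (\sum_(s < n j) (size (1 - (rr j s)^-1 *: 'X)%R).-1).+1)%N := size_prod_le _ _ _ _.
have hS : (\sum_(s < n j) (size (1 - (rr j s)^-1 *: 'X)%R).-1 <= n j)%N.
  apply: (@leq_trans (\sum_(s < n j) 1%N)); last first.
    by rewrite big_const_ord iter_addn_0 mul1n.
  apply: leq_sum => s _.
  have : (size (1 - (rr j s)^-1 *: 'X)%R <= 2)%N.
    apply: leq_trans (size_polyD _ _) _; rewrite size_polyN geq_max size_poly1 /=.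
    by apply: leq_trans (size_scale_leq _ _) _; rewrite size_polyX.
  lia.
move: h hS. set S := (\sum_(s < n j) _)%N. set P := size _. move=> h hS. lia.
Qed.

Lemma Hp_eval rr m n x :
  (forall j s, (1 <= j <= m)%N -> (s < n j)%N -> rr j s != 0) ->
  (Hp rr m n).[x] = \prod_(1 <= j < m.+1) (\prod_(s < n j) (rr j s - x) / \prod_(s < n j) rr j s).
Proof.
move=> hr; rewrite /Hp horner_prod big_nat_cond [RHS]big_nat_cond.
apply: eq_bigr => j /andP[/andP[h1 h2] _].
rewrite horner_prod -prodf_div; apply: eq_bigr => s _.
rewrite hornerD hornerN hornerZ hornerX hornerC.
have := hr j s; rewrite h1 -ltnS h2 => /(_ isT (ltn_ord s)) h.
by field.
Qed.

Lemma Hp_root rr m n j s :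
  (forall j s, (1 <= j <= m)%N -> (s < n j)%N -> rr j s != 0) ->
  (1 <= j <= m)%N -> (s < n j)%N -> (Hp rr m n).[rr j s] = 0.
Proof.
move=> hr hj hs; rewrite Hp_eval //; apply/eqP; rewrite prodf_seq_eq0.
apply/hasP; exists j; first by rewrite mem_index_iota; lia.
rewrite mulf_eq0; apply/orP; left; rewrite prodf_seq_eq0; apply/hasP.
by exists (Ordinal hs); [exact: mem_index_enum | rewrite /= subrr eqxx].
Qed.

Lemma Hp0 rr m n : (Hp rr m n).[0] = 1.
Proof.
rewrite /Hp horner_prod big1 // => j _.
rewrite horner_prod big1 // => s _.
by rewrite hornerD hornerN hornerZ hornerX hornerC mulr0 subr0.
Qed.

Lemma sum_trunc N k (a f : nat -> rat) :
  \sum_(i < k.+1) (if (i < N.+1)%N then a i else 0) * f (k - i)%N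
  = \sum_(0 <= i < (minn N k).+1) a i * f (k - i)%N.
Proof.
rewrite -(big_mkord xpredT (fun i => (if (i < N.+1)%N then a i else 0) * f (k - i)%N)).
rewrite (big_cat_nat _ (n := (minn N k).+1)) //=; last by rewrite ltnS geq_minr.
rewrite [X in _ + X]big1_seq ?addr0; last first.
  move=> i /andP[_]; rewrite mem_index_iota => /andP[h1 h2].
  have -> : (i < N.+1)%N = false by lia.
  by rewrite mul0r.
apply: eq_big_nat => i /andP[_ hi]; have -> : (i < N.+1)%N = true by lia.
done.
Qed.

Theorem theorem1 (m : nat) (alpha : nat -> rat) (n Nj : nat -> nat) :
  (1 <= m)%N ->
  (forall i, (i <= m)%N -> 0 < alpha i) ->
  (forall i j, (1 <= i)%N -> (i < j)%N -> (j <= m)%N ->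
     ~ exists z : int, alpha i - alpha j = z%:~R) ->
  (forall j, (1 <= j <= m)%N -> (0 < n j)%N) ->
  (forall j, (1 <= j <= m)%N -> (0 < Nj j)%N) ->
  (forall j, (1 <= j <= m)%N -> (bigN m n - 1 <= Nj j)%N) ->
  Qpoly alpha m n Nj != 0 /\
  (size (Qpoly alpha m n Nj) <= (bigN m n).+1)%N /\
  (forall j, (1 <= j <= m)%N ->
     (size (Ppoly alpha m n Nj j) <= (Nj j).+1)%N /\
     ord_ge (Qpoly alpha m n Nj) (phi_coef alpha j) (Ppoly alpha m n Nj j)
            (Nj j + n j + 1)).
Proof.
move=> hm hpos _ hn _ hNj.
pose N := bigN m n.
pose a0 := alpha 0%N.
pose rr j s := alpha j + (Nj j)%:R - N%:R + 1 + s%:R.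
have hrr : forall j s, (1 <= j <= m)%N -> (s < n j)%N -> rr j s != 0.
  move=> j s hj _; apply: lt0r_neq0.
  have hN : (N <= Nj j + 1 + s)%N by have := hNj j hj; rewrite /N; lia.
  have : (N%:R <= (Nj j + 1 + s)%:R :> rat) by rewrite ler_nat.
  have : 0 < alpha j by apply: hpos; case/andP: hj.
  rewrite /rr !natrD; lra.
pose H := Hp rr m n.
have hHs : (size H <= N.+1)%N := size_Hp rr m n.
have ha0 : 0 < a0 := hpos 0%N (leq0n m).
have hb : forall p, (p <= N)%N -> acoef alpha m n Nj (N - p) = bvec a0 N H p.
  move=> p hp; case: p hp => [|q] hq.
    by rewrite subn0 /= /H Hp0 /acoef /= eqxx.
  rewrite /acoef /= -/N.
  have -> : ((N - q.+1)%N == N) = false by apply/negbTE/eqP; lia.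
  have -> : (N - 1 - (N - q.+1) = q)%N by lia.
  rewrite /bvec; apply: eq_big_nat => l hl; rewrite /Kc -/a0; congr (_ * _).
  rewrite /H Hp_eval //; apply: eq_big_nat => j hj; congr (_ / _).
    by rewrite /poch; apply: eq_bigr => s _; rewrite /rr /a0; ring.
split.
  apply/eqP => h; have := congr1 (fun q : {poly rat} => q`_N) h.
  rewrite /= coef_poly ltnSn coef0 -[X in acoef _ _ _ _ X]subn0 hb //= Hp0.
  by move/eqP; rewrite oner_eq0.
split; first exact: size_poly.
move=> j hj; split; first exact: size_poly.
move=> k hk.
rewrite /Ppoly coef_poly.
under eq_bigr => i _ do rewrite /Qpoly coef_poly.
rewrite sum_trunc.
case: ifP => hkN; first by rewrite /ccoef subrr.
rewrite subr0.
have hNjj := hNj j hj; rewrite -/N in hNjj.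
have hkN' : (N <= k)%N by move: hkN; rewrite ltnS => /negbT; rewrite -ltnNge; lia.
have -> : minn (bigN m n) k = N by apply/minn_idPl.
rewrite big_nat_rev /=.
rewrite (eq_big_nat _ _ (F2 := fun p => acoef alpha m n Nj (N - p) * (poch (alpha j) ((k - N) + p) / poch (alpha j + alpha 0%N) ((k - N) + p)))); last first.
  move=> p /andP[_ hp]; rewrite add0n subSS /phi_coef.
  by have -> : (k - (N - p) = k - N + p)%N by lia.
have hj' : (j <= m)%N by case/andP: hj.
apply: (@pade_zero a0 (alpha j) N (k - N) H) => //; first exact: hpos.
have hs : (k - Nj j - 1 < n j)%N by lia.
have -> : alpha j + (k - N)%N%:R = rr j (k - Nj j - 1)%N.
  have e1 : ((k - N)%N%:R : rat) = k%:R - N%:R by rewrite natrB.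
  have e2 : ((k - Nj j - 1)%N%:R : rat) = k%:R - (Nj j)%:R - 1.
    rewrite -subnDA natrB ?natrD; [ring | lia].
  rewrite /rr e1 e2; ring.
exact: Hp_root.
Qed.
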